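(* Let $g_n$ denote the parity of the number of digits equal to $1$ in the negabinary representation of $n$. Then for every integer $m\ge0$: $g_{2^m-1}=0$ if $m=0$; $g_{2^m-1}=1$ if $m=1$; $g_{2^m-1}=1$ if $m\ge2$ is even; and $g_{2^m-1}=0$ if $m\ge3$ is odd.
   Context: Every nonnegative integer $n$ has a unique representation $n=\sum_{i\ge0} d_i(-2)^i$ with digits $d_i\in\{0,1\}$, only finitely many nonzero; this is the negabinary representation. Parity means the number modulo $2$. *)

(* Defs.v *)
From mathcomp Require Import all_boot all_order all_algebra.
Set Implicit Arguments. Unset Strict Implicit. Unset Printing Implicit Defensive.
Import GRing.Theory Num.Theory.
Local Open Scope ring_scope.

Definition negabinary_value (ds : seq nat) : int :=
  \sum_(i < size ds) (nth 0%N ds i)%:Z * (-2) ^+ i.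

Definition is_negabinary (ds : seq nat) (n : nat) : Prop :=
  all (fun d => (d <= 1)%N) ds /\ negabinary_value ds = n%:Z.

Definition ones (ds : seq nat) : nat := count (pred1 1%N) ds.

(* Main.v *)
Require Import Defs.
From mathcomp Require Import all_boot all_order all_algebra zify ring.
Import GRing.Theory Num.Theory.
Local Open Scope ring_scope.

Fixpoint vf (s : seq nat) : int :=
  match s with [::] => 0 | d :: t => d%:Z + (-2) * vf t end.

Lemma nvE s : negabinary_value s = vf s.
Proof.
elim: s => [|d s IH]; first by rewrite /negabinary_value big_ord0.
rewrite /negabinary_value /= big_ord_recl /= expr0 mulr1 -IH /negabinary_value.
congr (_ + _); rewrite mulr_sumr; apply: eq_bigr => i _.
by rewrite /bump /= exprS mulrCA.
Qed.

Lemma vf_head s : vf s = (head 0%N s)%:Z + (-2) * vf (behead s).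
Proof. by case: s => //=; rewrite mulr0 addr0. Qed.

Lemma ones_head s : ones s = (((head 0%N s) == 1%N) + ones (behead s))%N.
Proof. by case: s. Qed.

Lemma uniq_ones n : forall ds es, (size ds + size es <= n)%N ->
  all (fun d => (d <= 1)%N) ds -> all (fun d => (d <= 1)%N) es ->
  vf ds = vf es -> ones ds = ones es.
Proof.
elim: n => [|n IH] ds es.
  by case: ds; case: es.
move=> Hs Hd He Hv.
case: ds es Hs Hd He Hv => [|a ds] [|b es] //= Hs.
- move=> _ /andP[Hb He] Hv.
  have Hb0 : b = 0%N by lia.
  subst b; rewrite /ones /= -/(ones es) -(IH [::] es) //=; lia.
- move=> /andP[Ha Hd] _ Hv.
  have Ha0 : a = 0%N by lia.
  subst a; rewrite /ones /= -/(ones ds) (IH ds [::]) //=; lia.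
- move=> /andP[Ha Hd] /andP[Hb He] Hv.
  have Hab : a = b by lia.
  subst b; rewrite /ones /= -/(ones es) -/(ones ds) (IH ds es) //; lia.
Qed.

Lemma vf_nseq k s : vf (nseq k 0%N ++ s) = (-2) ^+ k * vf s.
Proof. elim: k => [|k IH] /=; first by rewrite mul1r. by rewrite IH add0r exprS mulrA. Qed.

Lemma ones_nseq k s : ones (nseq k 0%N ++ s) = ones s.
Proof. by elim: k. Qed.

Lemma pred2 m : ((2 ^ m).-1)%:Z = (2:int) ^+ m - 1.
Proof.
have h : (0 < 2 ^ m)%N by rewrite expn_gt0.
by rewrite -subn1 -subzn // -natz natrX.
Qed.

Theorem corollary1 (m : nat) :
  (exists ds : seq nat, is_negabinary ds (2 ^ m).-1) /\
  (forall ds : seq nat, is_negabinary ds (2 ^ m).-1 ->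
     odd (ones ds) =
       (if m == 0%N then false
        else if m == 1%N then true
        else if ~~ odd m then true
        else false)).
Proof.
suff [w Hw Hone] : exists2 w, is_negabinary w (2 ^ m).-1 & odd (ones w) = (if m == 0%N then false
        else if m == 1%N then true
        else if ~~ odd m then true
        else false).
  split; first by exists w.
  move=> ds [Hd Hv].
  have -> : ones ds = ones w.
    case: Hw => Hw1 Hw2.
    apply: (@uniq_ones (size ds + size w)) => //.
    by rewrite -!nvE Hv Hw2.
  exact: Hone.
case: m => [|[|m]].
- exists [::]; last by []. by split; rewrite ?nvE.
- exists [:: 1%N]; last by []. by split; rewrite ?nvE.
have [j ->] : exists j, m = (j.*2 + odd m)%N by exists m./2; rewrite addnC odd_double_half.
case: (odd m) => /=.
- exists ([:: 1%N; 1%N] ++ nseq (j.*2.+1) 0%N ++ [:: 1%N; 1%N]); last first.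
    rewrite /ones /= count_cat count_nseq /= ?mul0n; by rewrite oddD odd_double.
  split; first by rewrite /= all_cat all_nseq orbT.
  rewrite nvE pred2 /= vf_nseq /=.
  rewrite ?addn1 ?addn0 !exprS -!mul2n !exprM sqrrN.
  set t := (_ ^+ j); lia.
- exists ([:: 1%N; 1%N] ++ nseq (j.*2) 0%N ++ [:: 1%N]); last first.
    rewrite /ones /= count_cat count_nseq /= ?mul0n; by rewrite oddD odd_double.
  split; first by rewrite /= all_cat all_nseq orbT.
  rewrite nvE pred2 /= vf_nseq /=.
  rewrite ?addn1 ?addn0 !exprS -!mul2n !exprM sqrrN.
  set t := (_ ^+ j); lia.
Qed.
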